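(* Let $M$ be a regular singular difference module over $K$. Write $M=K\otimes_{\mathbb C}V$, where $V$ is a finite-dimensional $\mathbb C$-vector space with $A\in \mathrm{GL}(V)$ all of whose eigenvalues $\alpha$ satisfy $|q|<|\alpha|\le 1$, and $\Phi(a\otimes v)=\phi(a)\otimes A(v)$ for $a\in K$, $v\in V$ (such a presentation exists). Let $M_{global}\subset M$ be the set of $m\in M$ such that the $\mathbb C$-vector space spanned by $\{\Phi^n m\mid n\ge 0\}$ is finite-dimensional. Then $M_{global}=\mathbb C[z,z^{-1}]\otimes_{\mathbb C}V$, and consequently the natural map $K\otimes_{\mathbb C[z,z^{-1}]}M_{global}\to M$ is an isomorphism.
   Context: Fix $q\in\mathbb C$ with $0<|q|<1$. A difference ring is a commutative ring $R$ with an automorphism $\phi$; a difference module over $R$ is a free $R$-module $M$ of finite rank with an additive bijection $\Phi:M\to M$ satisfying $\Phi(rm)=\phi(r)\Phi(m)$. $K=\mathbb C(\{z\})$ denotes the field of convergent Laurent series (germs at $0$ of meromorphic functions), with $\phi(f)(z)=f(qz)$; $\mathbb C[z,z^{-1}]$ is a difference subring. A difference module $M$ over $K$ is regular singular if there is a $K$-basis $e_1,\dots,e_m$ of $M$ such that the lattice $\mathbb C\{z\}e_1\oplus\cdots\oplus\mathbb C\{z\}e_m$ is mapped onto itself by $\Phi$ and $\Phi^{-1}$ (here $\mathbb C\{z\}$ is the ring of convergent power series). *)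

(* Defs.v *)
From HB Require Import structures.
From mathcomp Require Import all_boot all_order all_algebra.
From mathcomp Require Import complex.
From mathcomp Require Import reals.
Set Implicit Arguments. Unset Strict Implicit. Unset Printing Implicit Defensive.
Import Order.TTheory GRing.Theory Num.Theory.
Local Open Scope ring_scope.

Section Defs.
Variable R : realType.
Local Notation C := R[i].

(* A Laurent series over C, given by its coefficient family c : int -> C
   (f = sum_k c k z^k).  It is a convergent Laurent series (an element of
   K = C({z})) if its coefficients vanish for k << 0 and the power series
   has a positive radius of convergence, i.e. |c k| r^k is bounded for
   some r > 0. *)
Definition conv_laurent (c : int -> C) : Prop :=
  (exists N : int, forall k : int, k < N -> c k = 0) /\
  (exists r : R, 0 < r /\ exists B : R, forall k : int, ComplexField.Normc.normc (c k) * r ^ k <= B).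

Definition laurent_poly (c : int -> C) : Prop :=
  exists N : nat, forall k : int, (N%:Z < `|k|%R)%R -> c k = 0.

(* M = K (x)_C V with V = C^n: elements are n-tuples of convergent Laurent
   series, m = sum_j m j (x) e_j. *)
Definition inM (n : nat) (m : 'I_n -> int -> C) : Prop :=
  forall i, conv_laurent (m i).

(* Phi (a (x) v) = phi(a) (x) A v, with phi(f)(z) = f(qz), i.e. on coefficients
   c_k |-> q^k c_k.  Hence (Phi m)_i = sum_j A i j * phi(m_j). *)
Definition Phi (n : nat) (q : C) (A : 'M[C]_n) (m : 'I_n -> int -> C)
  : 'I_n -> int -> C :=
  fun i k => q ^ k * \sum_(j < n) A i j * m j k.

Definition M_global (n : nat) (q : C) (A : 'M[C]_n) (m : 'I_n -> int -> C)
  : Prop :=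
  inM m /\
  exists s : seq ('I_n -> int -> C),
    forall p : nat, exists c : 'I_(size s) -> C,
      forall i k, iter p (Phi q A) m i k
                  = \sum_(j < size s) c j * (nth (fun _ _ => 0) s j) i k.

Definition laurent_poly_vec (n : nat) (m : 'I_n -> int -> C) : Prop :=
  forall i, laurent_poly (m i).

End Defs.

(* Main.v *)
Require Import Defs.
From HB Require Import structures.
From mathcomp Require Import all_boot all_order all_algebra.
From mathcomp Require Import complex.
From mathcomp Require Import reals.
From mathcomp Require Import ring lra zify.
From Stdlib Require Import Classical ClassicalEpsilon.
From Stdlib Require List.
Import Order.TTheory GRing.Theory Num.Theory.
Local Open Scope ring_scope.
Set Implicit Arguments. Unset Strict Implicit. Unset Printing Implicit Defensive.

Lemma normc_exprz (R : rcfType) (x : R[i]) (k : int) :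
  ComplexField.Normc.normc (x ^ k) = ComplexField.Normc.normc x ^ k.
Proof.
have hp : forall p : nat, ComplexField.Normc.normc (x ^+ p) = ComplexField.Normc.normc x ^+ p.
  elim=> [|p IH]; first by rewrite !expr0 ComplexField.Normc.normc1.
  by rewrite !exprS ComplexField.Normc.normcM IH.
case: k => p; first by rewrite -!exprnP hp.
by rewrite /exprz ComplexField.Normc.normcV hp.
Qed.

Section S.
Variable R : realType.
Local Notation C := R[i].
Variable n : nat.


Definition vk (m : 'I_n -> int -> C) (k : int) : 'cV[C]_n := \col_i m i k.

Lemma iterPhi (q : C) (A : 'M[C]_n) m p i k :
  iter p (Phi q A) m i k = (q ^ k) ^+ p * (A ^+ p *m vk m k) i 0.
Proof.
elim: p i => [|p IH] i /=.
  by rewrite expr0 mul1r mul1mx mxE.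
change (q ^ k * \sum_(j < n) A i j * iter p (Phi q A) m j k = (q ^ k) ^+ p.+1 * (A ^+ p.+1 *m vk m k) i 0).
rewrite exprS [A ^+ p.+1]exprS -mulmxE -mulmxA mxE -mulrA mulr_sumr.
rewrite mulr_sumr mulr_sumr; apply: eq_bigr => j _.
rewrite IH; ring.
Qed.
End S.


Lemma bound_lemma (T : eqType) (good : T -> int -> Prop)
  (ug : forall z k1 k2, good z k1 -> good z k2 -> k1 = k2) (rs : seq T) :
  forall S : int -> Prop, (forall k, S k -> exists z, z \in rs /\ good z k) ->
  exists N : nat, forall k, S k -> `|k| <= N%:Z.
Proof.
elim: rs => [|z rs IH] S HS.
  by exists 0%N => k /HS [z []].
have [[k0 [Sk0 gk0]]|nex] := classic (exists k0, S k0 /\ good z k0).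
  have [N HN] : exists N : nat, forall k, S k /\ k <> k0 -> `|k| <= N%:Z.
    apply: IH => k [Sk nk]; have [z' [zi g]] := HS k Sk.
    move: zi; rewrite in_cons => /orP [/eqP ez|iz].
      by subst z'; exfalso; exact: nk (ug _ _ _ g gk0).
    by exists z'.
  exists (maxn N `|k0|%N) => k Sk.
  have [->|nk] := eqVneq k k0.
    by rewrite -abszE lez_nat leq_maxr.
  apply: (le_trans (HN k (conj Sk (elimN eqP nk)))).
  by rewrite lez_nat leq_maxl.
apply: IH => k Sk; have [z' [zi g]] := HS k Sk.
move: zi; rewrite in_cons => /orP [/eqP ez|iz].
  by subst z'; exfalso; apply: nex; exists k.
by exists z'.
Qed.


Lemma lt_pow_aux (R : realFieldType) (r : R) (k1 k2 : int) :
  0 < r -> r <= 1 -> k1 < k2 -> r ^ k2 <= r ^ (k1 + 1).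
Proof.
move=> r0 r1 lt12.
have -> : k2 = (k1 + 1) + (k2 - k1 - 1) by ring.
have r0' : r != 0 by rewrite gt_eqF.
rewrite expfzDr //.
have : 0 <= k2 - k1 - 1 by lia.
case: (k2 - k1 - 1) => // d _.
rewrite -exprnP -[X in _ <= X]mulr1 ler_wpM2l ?exprz_ge0 ?(ltW r0) //.
by rewrite exprn_ile1 // ltW.
Qed.

Lemma good_uniq (R : realFieldType) (r x : R) : 0 < r -> r <= 1 ->
  forall k1 k2 : int, r ^ (k1 + 1) < x <= r ^ k1 -> r ^ (k2 + 1) < x <= r ^ k2 -> k1 = k2.
Proof.
move=> r0 r1 k1 k2 /andP[a1 b1] /andP[a2 b2].
case: (ltgtP k1 k2) => // h.
  by have := @lt_pow_aux _ _ _ _ r0 r1 h; rewrite leNgt (lt_le_trans a1 b2).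
by have := @lt_pow_aux _ _ _ _ r0 r1 h; rewrite leNgt (lt_le_trans a2 b1).
Qed.


Section K.
Variable F : fieldType.
Variable n : nat.

Lemma det_horner (B : 'M[F]_n.+1) (lc : F) (rs : seq F) :
  \det (horner_mx B (lc *: \prod_(z <- rs) ('X - z%:P))) =
  lc ^+ n.+1 * \prod_(z <- rs) \det (B - z%:M).
Proof.
rewrite -mul_polyC rmorphM /=.
rewrite (horner_mx_C B) rmorph_prod /=.
rewrite -mulmxE det_mulmx det_scalar; congr (_ * _).
rewrite (big_morph _ (@det_mulmx F n.+1) (@det1 F n.+1)).
apply: eq_bigr => z _; by rewrite rmorphB /= horner_mx_X horner_mx_C.
Qed.

Lemma det0_of_ker (X : 'M[F]_n.+1) (v : 'cV[F]_n.+1) : v != 0 -> X *m v = 0 -> \det X = 0.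
Proof.
move=> v0 Xv; apply/eqP; rewrite -det_tr; apply/det0P; exists v^T.
  by rewrite trmx_eq0.
by rewrite -trmx_mul Xv trmx0.
Qed.

Lemma key (B : 'M[F]_n.+1) (lc : F) (rs : seq F) (v : 'cV[F]_n.+1) : lc != 0 -> v != 0 ->
  horner_mx B (lc *: \prod_(z <- rs) ('X - z%:P)) *m v = 0 ->
  exists2 z, z \in rs & \det (B - z%:M) = 0.
Proof.
move=> lc0 v0 Hv; have := @det0_of_ker _ v v0 Hv; rewrite det_horner => /eqP.
rewrite mulf_eq0 expf_eq0 (negbTE lc0) andbF /= prodf_seq_eq0 => /hasP [z zr /= /eqP dz].
by exists z.
Qed.
End K.

Lemma forward (R : realType) (n : nat) (q : R[i]) (A : 'M[R[i]]_n.+1) :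
  0 < ComplexField.Normc.normc q < 1 ->
  (forall a : R[i], eigenvalue A a -> ComplexField.Normc.normc q < ComplexField.Normc.normc a <= 1) ->
  forall m, M_global q A m -> laurent_poly_vec m.
Proof.
move=> /andP[q0 q1] Heig m [_ [s Hs]].
set d := size s.
pose cf p := proj1_sig (constructive_indefinite_description _ (Hs p)).
have cfP p i k : iter p (Phi q A) m i k = \sum_(j < d) cf p j * nth (fun _ _ => 0) s j i k.
  exact: (proj2_sig (constructive_indefinite_description _ (Hs p)) i k).
pose Mat : 'M[R[i]]_(d.+1, d) := \matrix_(p < d.+1, j < d) cf p j.
have : kermx Mat != 0.
  rewrite kermx_eq0 /row_free; apply/negP => /eqP h.
  by have := rank_leq_col Mat; rewrite h ltnn.
case/rowV0Pn => w /sub_kermxP wM w0.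
have C1 i k : \sum_(p < d.+1) w 0 p * iter p (Phi q A) m i k = 0.
  transitivity (\sum_(j < d) (w *m Mat) 0 j * nth (fun _ _ => 0) s j i k); last first.
    by rewrite wM big1 // => j _; rewrite mxE mul0r.
  under eq_bigr do rewrite cfP mulr_sumr.
  rewrite exchange_big /=; apply: eq_bigr => j _; rewrite mxE mulr_suml.
  by apply: eq_bigr => p _; rewrite mxE mulrA.
pose P := \poly_(p < d.+1) w 0 (inord p).
have P0 : P != 0.
  apply: contra w0 => /eqP P0; apply/eqP/rowP => p.
  by have := congr1 (fun P0 : {poly R[i]} => P0`_p) P0; rewrite /= coef_poly ltn_ord coef0 inord_val !mxE.
have C2 k : horner_mx (q ^ k *: A) P *m vk m k = 0.
  rewrite /P poly_def rmorph_sum /= mulmx_suml; apply/matrixP => i j.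
  rewrite ord1 summxE mxE -[RHS](C1 i k); apply: eq_bigr => p _.
  rewrite inord_val -mul_polyC rmorphM /= (horner_mx_C (q ^ k *: A)) rmorphXn /= horner_mx_X.
  rewrite -mulmxE mul_scalar_mx -scalemxAl mxE exprZn -scalemxAl mxE iterPhi.
  by rewrite mulrA.
have [rs Hrs] := closed_field_poly_normal P.
have lc0 : lead_coef P != 0 by rewrite lead_coef_eq0.
set r := ComplexField.Normc.normc q.
have r1 : r <= 1 by apply: ltW.
have qn0 : q != 0.
  by apply: contraTneq q0 => ->; rewrite /r ComplexField.Normc.normc0 ltxx.
have Hk k : vk m k != 0 -> exists z, z \in rs /\
    (r ^ (k + 1) < ComplexField.Normc.normc z <= r ^ k).
  move=> vk0; have := C2 k; rewrite Hrs => /(key lc0 vk0) [z zr dz]; exists z; split => //.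
  have qk0 : q ^ k != 0 := expfz_neq0 k qn0.
  pose a := z / q ^ k.
  have ea : eigenvalue A a.
    rewrite /eigenvalue /eigenspace kermx_eq0 row_free_unit unitmxE unitfE negbK.
    have e : q ^ k *: A - z%:M = q ^ k *: (A - a%:M).
      by rewrite scalerBr scale_scalar_mx /a mulrC divfK.
    move: dz; rewrite e detZ => /eqP; rewrite mulf_eq0 expf_eq0 (negbTE qk0) andbF /=.
    by [].
  have := Heig a ea; rewrite /a ComplexField.Normc.normcM ComplexField.Normc.normcV normc_exprz -/r.
  set x := ComplexField.Normc.normc z.
  have rk0 : 0 < r ^ k := exprz_gt0 k q0.
  rewrite ltr_pdivlMr // ler_pdivrMr // mul1r expfzDr ?gt_eqF // expr1z mulrC.
  by [].
have [N HN] := @bound_lemma _ (fun z k => r ^ (k + 1) < ComplexField.Normc.normc z <= r ^ k)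
   (fun z k1 k2 => @good_uniq _ r _ q0 r1 k1 k2) rs (fun k => vk m k != 0) Hk.
move=> i; exists N => k Nk; apply/eqP; apply: contraLR Nk => mik; rewrite -leNgt; apply: HN.
apply: contra mik => /eqP vz.
by have := congr1 (fun M : 'cV[R[i]]_n.+1 => M i 0) vz; rewrite !mxE => ->.
Qed.

Lemma backward (R : realType) (n : nat) (q : R[i]) (A : 'M[R[i]]_n.+1)
  (m : 'I_n.+1 -> int -> R[i]) : laurent_poly_vec m ->
  exists s : seq ('I_n.+1 -> int -> R[i]),
    forall p : nat, exists c : 'I_(size s) -> R[i],
      forall i k, iter p (Phi q A) m i k
                  = \sum_(j < size s) c j * (nth (fun _ _ => 0) s j) i k.
Proof.
move=> Hl.
pose Ni i := proj1_sig (constructive_indefinite_description _ (Hl i)).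
have NiP i k : ((Ni i)%:Z < `|k|)%R -> m i k = 0.
  exact: (proj2_sig (constructive_indefinite_description _ (Hl i)) k).
pose N := \max_(i < n.+1) Ni i.
have mz i k : (N%:Z < `|k|)%R -> m i k = 0.
  move=> h; apply: NiP; apply: le_lt_trans h; rewrite lez_nat.
  exact: (leq_bigmax_cond i).
have itz p i k : (N%:Z < `|k|)%R -> iter p (Phi q A) m i k = 0.
  move=> h; rewrite iterPhi.
  have -> : vk m k = 0 by apply/matrixP => j l; rewrite !mxE mz.
  by rewrite mulmx0 mxE mulr0.
pose x0 : 'I_n.+1 * 'I_(N.*2).+1 := (ord0, ord0).
pose e := enum {: 'I_n.+1 * 'I_(N.*2).+1}.
pose bas (x : 'I_n.+1 * 'I_(N.*2).+1) := fun (i : 'I_n.+1) (k : int) =>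
  if (i == x.1) && (k == (x.2 : nat)%:Z - N%:Z) then (1 : R[i]) else 0.
exists (map bas e) => p.
pose f (x : 'I_n.+1 * 'I_(N.*2).+1) := iter p (Phi q A) m x.1 ((x.2 : nat)%:Z - N%:Z).
exists (fun j => f (nth x0 e j)) => i k.
rewrite -(big_mkord xpredT (fun j => f (nth x0 e j) * nth (fun=> (fun=> 0)) [seq bas i | i <- e] j i k)).
rewrite size_map.
transitivity (\sum_(x <- e) f x * bas x i k); last first.
  rewrite (big_nth x0); apply: eq_big_nat => j /andP[_ hj].
  by rewrite (nth_map x0 (fun=> (fun=> 0))).
rewrite big_enum /=.
have term (x : 'I_n.+1 * 'I_(N.*2).+1) : f x * bas x i k =
    if (i == x.1) && (k == (x.2 : nat)%:Z - N%:Z) then iter p (Phi q A) m i k else 0.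
  rewrite /bas; case: ifP => [/andP[/eqP -> /eqP ->]|_]; by rewrite ?mulr1 ?mulr0.
under eq_bigr do rewrite term.
have [hk|hk] := lerP `|k| N%:Z; last first.
  by rewrite itz //; apply/esym/big1 => x _; case: ifP.
pose l := absz (k + N%:Z).
have lE : l%:Z = k + N%:Z by rewrite /l gez0_abs //; lia.
have hl : (l < (N.*2).+1)%N by rewrite -ltz_nat lE; lia.
rewrite (bigD1 (i, inord l)) //= big1 => [|x nx].
  by rewrite eqxx inordK // lE addrK eqxx addr0.
case: ifP => // /andP[/eqP ei /eqP ek]; exfalso; move: nx.
case: x ei ek => a b /= ei ek; rewrite -ei.
have -> : b = inord l by apply: val_inj; rewrite /= inordK //; apply/eqP; rewrite -eqz_nat lE; apply/eqP; lia.
by rewrite eqxx.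
Qed.

Unset Implicit Arguments.
Set Strict Implicit.
Theorem lemma1p1 (R : realType) (n : nat) (q : R[i]) (A : 'M[R[i]]_n) :
  0 < ComplexField.Normc.normc q < 1 ->
  A \in unitmx ->
  (forall a : R[i], eigenvalue A a -> ComplexField.Normc.normc q < ComplexField.Normc.normc a <= 1) ->
  forall m : 'I_n -> int -> R[i],
    M_global q A m <-> (inM m /\ laurent_poly_vec m).
Proof.
move=> Hq _; case: n A => [|n] A Heig m; split.
- by case=> Hm _; split => // -[].
- case=> Hm _; split => //; exists [::] => p; exists (fun _ => 0) => i; have := ltn_ord i; by rewrite ltn0.
- move=> H; split; first by case: H.
  exact: (forward Hq Heig H).
- by case=> Hm Hl; split => //; exact: backward.
Qed.
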